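(* Let $G_1,\dots,G_k$ be finite connected graphs and $G=G_1\Box G_2\Box\cdots\Box G_k$ their Cartesian product. Suppose that each distance matrix $D(G_i)$, $i=1,\dots,k$, has constant row sums. Then (a) $n_-(D(G))\ge \sum_{i=1}^k n_-(D(G_i))$, and (b) $n_+(D(G))\ge 1+\sum_{i=1}^k\bigl(n_+(D(G_i))-1\bigr)$.
   Context: For a connected graph $G$ with vertices $v_1,\dots,v_n$, the distance matrix $D(G)$ is the $n\times n$ matrix with $(i,j)$ entry equal to the graph distance $d(v_i,v_j)$. For a real symmetric matrix $M$, $n_+(M)$ and $n_-(M)$ denote the numbers of positive and negative eigenvalues of $M$ counted with multiplicity. The Cartesian product $G_1\Box\cdots\Box G_k$ has vertex set $V(G_1)\times\cdots\times V(G_k)$, with $(x_1,\dots,x_k)$ adjacent to $(y_1,\dots,y_k)$ iff for some $j$, $x_j$ is adjacent to $y_j$ in $G_j$ and $x_i=y_i$ for all $i\neq j$. *)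

(* Defs.v *)
From HB Require Import structures.
From mathcomp Require Import all_boot all_order all_algebra.
From mathcomp Require Import polyrcf.
Set Implicit Arguments. Unset Strict Implicit. Unset Printing Implicit Defensive.
Import Order.TTheory GRing.Theory Num.Theory.
Local Open Scope ring_scope.

Definition simple_graph (T : finType) (e : rel T) : Prop :=
  symmetric e /\ irreflexive e.

Definition connected_graph (T : finType) (e : rel T) : Prop :=
  (0 < #|T|)%N /\ forall x y : T, connect e x y.

Definition has_walk (T : finType) (e : rel T) (n : nat) (x y : T) : bool :=
  [exists p : n.-tuple T, path e x p && (last x p == y)].

(* graph distance: least n (< #|T|) such that a walk of length n from x to y
   exists; for connected graphs a shortest walk is a path of length < #|T|. *)
Definition gdist (T : finType) (e : rel T) (x y : T) : nat :=
  \big[minn/#|T|]_(n < #|T| | has_walk e n x y) (n : nat).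

Definition distmx (R : nzRingType) (T : finType) (e : rel T) : 'M[R]_#|T| :=
  \matrix_(i, j) (gdist e (enum_val i) (enum_val j))%:R.

Definition npos (R : rcfType) (n : nat) (M : 'M[R]_n) : nat :=
  (\sum_(x <- rootsR (char_poly M) | (0 < x)%R) mup x (char_poly M))%N.
Definition nneg (R : rcfType) (n : nat) (M : 'M[R]_n) : nat :=
  (\sum_(x <- rootsR (char_poly M) | (x < 0)%R) mup x (char_poly M))%N.

Definition const_row_sums (R : nzRingType) (n : nat) (M : 'M[R]_n) : Prop :=
  exists c : R, forall i, \sum_j M i j = c.

Definition cprod_rel (k : nat) (T : 'I_k -> finType) (e : forall i, rel (T i))
  : rel {dffun forall i : 'I_k, T i} :=
  fun x y => [exists j, e j (x j) (y j) && [forall i, (i != j) ==> (x i == y i)]].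

(* Main.v *)
Require Import Defs.
From HB Require Import structures.
From mathcomp Require Import all_boot all_order all_algebra.
From mathcomp Require Import polyrcf.
Import Order.TTheory GRing.Theory Num.Theory.
Local Open Scope ring_scope.
Unset Printing Implicit Defensive.

Local Close Scope ring_scope.
Set Implicit Arguments. Unset Strict Implicit.

Section Walks.
Variables (T : finType) (e : rel T).

Lemma has_walkP n x y :
  reflect (exists p, [/\ size p = n, path e x p & last x p = y]) (has_walk e n x y).
Proof.
apply: (iffP existsP) => [[p /andP[pp /eqP lp]]|[p [sp pp lp]]].
  by exists (val p); rewrite size_tuple.
have sp' : size p == n by rewrite sp.
by exists (Tuple sp'); rewrite /= pp lp eqxx.
Qed.

Lemma walk0 x y : has_walk e 0 x y = (x == y).
Proof.
apply/has_walkP/eqP => [[p [/size0nil -> _ /= ->]]|->] //.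
by exists [::].
Qed.

Lemma walkS n x y :
  has_walk e n.+1 x y <-> exists z, e x z /\ has_walk e n z y.
Proof.
split => [/has_walkP [[|z p] [//= [sp] /andP[exz pp] lp]]|[z [exz /has_walkP[p [sp pp lp]]]]].
  by exists z; split => //; apply/has_walkP; exists p.
by apply/has_walkP; exists (z :: p); rewrite /= sp exz pp lp.
Qed.

Lemma walk_cat n m x y z :
  has_walk e n x y -> has_walk e m y z -> has_walk e (n + m) x z.
Proof.
move=> /has_walkP[p [sp pp lp]] /has_walkP[q [sq pq lq]].
apply/has_walkP; exists (p ++ q); rewrite size_cat cat_path last_cat lp sp sq.
by rewrite pp pq.
Qed.

Lemma walk_rev n x y : symmetric e -> has_walk e n x y -> has_walk e n y x.
Proof.
move=> se; elim: n x y => [|n IH] x y; first by rewrite !walk0 eq_sym.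
move=> /walkS [z [exz wzy]]; rewrite -addn1; apply: walk_cat (IH _ _ wzy) _.
by apply/walkS; exists x; rewrite se exz walk0.
Qed.

Lemma walk_short n x y : has_walk e n x y ->
  exists m, [/\ (m < #|T|)%N, (m <= n)%N & has_walk e m x y].
Proof.
move=> /has_walkP[p [sp pp lp]].
rewrite -lp; case: (shortenP pp) => p' pp' up' sub.
exists (size p'); split.
- by rewrite -ltnS -/(size (x :: p')) -(card_uniqP up') ltnS; apply: max_card.
- by rewrite -sp; apply: uniq_leq_size => //; case/andP: up'.
- by apply/has_walkP; exists p'.
Qed.

Lemma bigmin_le (m : nat) (P : pred 'I_m) (F : 'I_m -> nat) x i0 :
  P i0 -> (\big[minn/x]_(i < m | P i) F i <= F i0)%N.
Proof.
move=> Pi0; have : i0 \in index_enum 'I_m by rewrite mem_index_enum.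
elim: (index_enum _) => [//|j r IH]; rewrite inE big_cons.
case/orP => [/eqP<-|/IH h]; first by rewrite Pi0 geq_minl.
by case: (P j) => //; rewrite geq_min h orbT.
Qed.

Lemma bigmin_ge (m : nat) (P : pred 'I_m) (F : 'I_m -> nat) x b :
  (b <= x)%N -> (forall i, P i -> b <= F i)%N -> (b <= \big[minn/x]_(i < m | P i) F i)%N.
Proof.
move=> bx bF; apply: (big_ind (fun v => b <= v)%N) => //.
  by move=> u v bu bv; rewrite leq_min bu bv.
Qed.

Lemma gdist_le n x y : has_walk e n x y -> (gdist e x y <= n)%N.
Proof.
case/walk_short => m [mT mn wm]; apply: leq_trans mn.
exact: (@bigmin_le _ (fun i : 'I_#|T| => has_walk e i x y) (fun i => nat_of_ord i) _ (Ordinal mT)).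
Qed.

Lemma gdist_walk n x y : has_walk e n x y -> has_walk e (gdist e x y) x y.
Proof.
move=> w; have ex : exists n, has_walk e n x y by exists n.
case: (ex_minnP ex) => m0 wm0 minm0.
suff -> : gdist e x y = m0 by [].
apply/eqP; rewrite eqn_leq gdist_le //=; apply: bigmin_ge => [|i wi]; last exact: minm0.
have [m [mT _ wm]] := walk_short wm0; exact: leq_trans (minm0 _ wm) (ltnW mT).
Qed.

Lemma conn_walk x y : connect e x y -> exists n, has_walk e n x y.
Proof.
case/connectP => p pp ly; exists (size p); apply/has_walkP; exists p; split => //.
Qed.

Lemma gdist0 x : gdist e x x = 0%N.
Proof. by apply/eqP; rewrite -leqn0; apply: (@gdist_le 0); rewrite walk0. Qed.

Lemma gdist_sym x y : symmetric e -> connect e x y -> gdist e x y = gdist e y x.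
Proof.
move=> se /conn_walk [n w]; have w' := walk_rev se w.
apply/eqP; rewrite eqn_leq; apply/andP; split; apply: gdist_le; apply: walk_rev => //.
  exact: gdist_walk w'.
exact: gdist_walk w.
Qed.

Lemma gdist_step x z y : e x z -> connect e z y ->
  (gdist e x y <= (gdist e z y).+1)%N.
Proof.
move=> exz /conn_walk [n w]; apply: gdist_le; apply/walkS; exists z; split => //.
exact: gdist_walk w.
Qed.
End Walks.

Unset Implicit Arguments. Set Strict Implicit.

Section Prod.
Variables (k : nat) (T : 'I_k -> finType) (e : forall i, rel (T i)).
Local Notation V := {dffun forall i : 'I_k, T i}.
Local Notation E := (cprod_rel e).

Definition upd (y : V) j (b : T j) : V :=
  @finfun _ (fun i => T i) (@dfwith _ (fun i => T i) (fun i => y i) j b).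

Arguments upd y j b : clear implicits.

Lemma upd_in (y : V) j b : upd y j b j = b.
Proof. by rewrite /upd ffunE dfwith_in. Qed.

Lemma upd_out (y : V) j b i : i != j -> upd y j b i = y i.
Proof. by move=> ij; rewrite /upd ffunE dfwith_out // eq_sym. Qed.

Lemma walk_lift (j : 'I_k) (n : nat) (a b : T j) (y : V) :
  has_walk (e j) n a b -> has_walk E n (upd y j a) (upd y j b).
Proof.
elim: n a => [|n IH] a; first by rewrite !walk0 => /eqP->.
case/walkS => z [eaz w]; apply/walkS; exists (upd y j z); split; last exact: IH.
apply/existsP; exists j; rewrite !upd_in eaz /=; apply/forallP => i.
by apply/implyP => ij; rewrite !upd_out.
Qed.

Hypothesis conn : forall j (a b : T j), connect (e j) a b.

Lemma gdist_prod_ge n (x y : V) : has_walk E n x y ->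
  (\sum_j gdist (e j) (x j) (y j) <= n)%N.
Proof.
elim: n x => [|n IH] x.
  by rewrite walk0 => /eqP->; rewrite big1 // => j _; rewrite gdist0.
case/walkS => z [/existsP [j /andP [exz /forallP oth]] w].
apply: leq_trans (_ : (\sum_j gdist (e j) (z j) (y j)).+1 <= n.+1)%N; last by rewrite ltnS IH.
rewrite (bigD1 j) //= [X in (_ <= X.+1)%N](bigD1 j) //= -addSn leq_add //.
  idtac.
apply: (@gdist_step _ (e j) _ (z j)) => //.
rewrite leq_eqVlt; apply/orP; left; apply/eqP/eq_bigr => i ij.
by move/implyP: (oth i) => /(_ ij) /eqP ->.
Qed.

Definition zpref (x y : V) (m : nat) : V :=
  @finfun _ (fun i => T i) (fun i => if (i < m)%N then y i else x i).

Lemma walk_pref (x y : V) m : (m <= k)%N ->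
  has_walk E (\sum_(j < k | (j < m)%N) gdist (e j) (x j) (y j)) x (zpref x y m).
Proof.
elim: m => [|m IH] mk.
  rewrite big_pred0 // walk0; apply/eqP/ffunP => i; by rewrite ffunE.
pose jm : 'I_k := Ordinal mk.
rewrite (bigD1 jm) //= addnC.
rewrite (eq_bigl (fun j : 'I_k => (j < m)%N)); last first.
  by move=> j /=; rewrite ltnS -val_eqE /= andbC ltn_neqAle.
apply: walk_cat (IH (ltnW mk)) _.
have -> : zpref x y m = upd (zpref x y m) jm (x jm).
  apply/ffunP => i; case: (eqVneq i jm) => [->|ij]; first by rewrite upd_in ffunE ltnn.
  by rewrite upd_out.
have -> : zpref x y m.+1 = upd (zpref x y m) jm (y jm).
  apply/ffunP => i; case: (eqVneq i jm) => [->|ij]; first by rewrite upd_in ffunE ltnSn.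
  rewrite upd_out // !ffunE ltnS leq_eqVlt.
  suff -> : (i == m :> nat) = false by [].
  by apply/negP => /eqP im; move: ij; rewrite -val_eqE /= im eqxx.
apply: walk_lift; have [n w] := conn_walk (conn jm (x jm) (y jm)); exact: gdist_walk w.
Qed.

Lemma gdist_prod (x y : V) :
  gdist E x y = (\sum_j gdist (e j) (x j) (y j))%N.
Proof.
move: (walk_pref x y k (leqnn k)).
have -> : zpref x y k = y by apply/ffunP => i; rewrite ffunE ltn_ord.
have -> : (\sum_(j < k | (j < k)%N) gdist (e j) (x j) (y j) =
           \sum_j gdist (e j) (x j) (y j))%N by apply: eq_bigl => j; rewrite ltn_ord.
move=> w'; apply/eqP; rewrite eqn_leq gdist_le //=.
exact: gdist_prod_ge (gdist_walk w').
Qed.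

End Prod.
Arguments upd {k T} y j b.

Local Open Scope ring_scope.

Section Count.
Variable R : rcfType.
Implicit Types p q : {poly R}.

Definition cntp (P : pred R) p : nat := (\sum_(x <- rootsR p | P x) mup x p)%N.

Lemma mem_rootsR p x : p != 0 -> (x \in rootsR p) = root p x.
Proof. by move=> pn0; move: (roots_on_rootsR pn0 x); rewrite in_itv /=. Qed.

Lemma cnt_any (P : pred R) p (s : seq R) : p != 0 -> uniq s ->
  (forall x, root p x -> x \in s) -> cntp P p = (\sum_(x <- s | P x) mup x p)%N.
Proof.
move=> pn0 us sub; rewrite /cntp.
rewrite (perm_big [seq x <- s | root p x]); last first.
  apply: uniq_perm; [exact: uniq_roots | exact: filter_uniq |].
  move=> x; rewrite mem_filter mem_rootsR //.
  by case rx: (root p x) => //=; rewrite sub.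
rewrite big_filter_cond (bigID (root p) (fun x => P x)) /=.
rewrite [X in (_ + X)%N]big1 ?addn0; last by move=> x /andP[_ /mupNroot].
by apply: eq_bigl => x; rewrite andbC.
Qed.

Lemma cntM (P : pred R) p q : p != 0 -> q != 0 ->
  cntp P (p * q) = (cntp P p + cntp P q)%N.
Proof.
move=> pn0 qn0; have pqn0 : p * q != 0 by rewrite mulf_neq0.
pose s := undup (rootsR p ++ rootsR q).
have us : uniq s by exact: undup_uniq.
rewrite (@cnt_any P _ s pqn0 us); last first.
  by move=> x; rewrite rootM mem_undup mem_cat !mem_rootsR.
rewrite (@cnt_any P _ s pn0 us); last by move=> x rx; rewrite mem_undup mem_cat mem_rootsR ?rx.
rewrite (@cnt_any P _ s qn0 us); last by move=> x rx; rewrite mem_undup mem_cat orbC mem_rootsR ?rx.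
by rewrite -big_split /=; apply: eq_bigr => x _; rewrite mupM.
Qed.

Lemma cnt_dvd (P : pred R) p q : q != 0 -> p %| q -> (cntp P p <= cntp P q)%N.
Proof.
move=> qn0 /dvdpP [r qe]; move: qn0; rewrite qe => qn0.
have rn0 : r != 0 by apply: contraNneq qn0 => ->; rewrite mul0r.
have pn0 : p != 0 by apply: contraNneq qn0 => ->; rewrite mulr0.
by rewrite cntM // leq_addl.
Qed.

Lemma cnt_XsubC (P : pred R) a : cntp P ('X - a%:P) = P a.
Proof.
rewrite (@cnt_any P _ [:: a]) ?polyXsubC_eq0 //; last first.
  by move=> x; rewrite root_XsubC inE.
rewrite big_cons big_nil; case: (P a) => //.
by rewrite -['X - a%:P]expr1 mup_XsubCX eqxx.
Qed.

Lemma cntZ (P : pred R) a p : a != 0 -> cntp P (a *: p) = cntp P p.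
Proof.
move=> an0; have [->|pn0] := eqVneq p 0; first by rewrite scaler0.
rewrite -mul_polyC cntM ?polyC_eq0 //.
by rewrite /cntp rootsRC big_nil.
Qed.

Lemma mup_comp_le (c : R) x p : c != 0 -> p != 0 ->
  (mup (c * x) p <= mup x (p \Po (c *: 'X)))%N.
Proof.
move=> cn0 pn0.
have qn0 : p \Po (c *: 'X) != 0.
  by rewrite comp_poly_eq0 // size_scale // size_polyX.
rewrite mup_geq //.
set n := mup (c * x) p.
have := leqnn n; rewrite {1}/n mup_geq // => /dvdpP [r pe].
rewrite pe comp_polyM; apply: dvdp_mull.
have h1 : ('X - (c * x)%:P) \Po (c *: 'X) = c *: ('X - x%:P).
  rewrite comp_polyB comp_polyX comp_polyC scalerBr; congr (_ - _).
  by rewrite -mul_polyC -polyCM.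
have -> : forall n, (('X - (c * x)%:P) ^+ n) \Po (c *: 'X) = (c *: ('X - x%:P)) ^+ n.
  elim => [|m IH]; first by rewrite !expr0 -polyC1 comp_polyC.
  by rewrite !exprS comp_polyM IH h1.
by rewrite exprZn dvdpZr ?expf_neq0.
Qed.

Lemma comp_scaleK (c : R) p : c != 0 -> (p \Po (c *: 'X)) \Po (c^-1 *: 'X) = p.
Proof.
move=> cn0; rewrite -comp_polyA comp_polyZ comp_polyX scalerA mulfV //.
by rewrite scale1r comp_polyXr.
Qed.

Lemma mup_comp (c : R) x p : c != 0 -> p != 0 ->
  mup x (p \Po (c *: 'X)) = mup (c * x) p.
Proof.
move=> cn0 pn0; have qn0 : p \Po (c *: 'X) != 0.
  by rewrite comp_poly_eq0 // size_scale // size_polyX.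
apply/eqP; rewrite eqn_leq mup_comp_le // andbT.
have h := @mup_comp_le c^-1 (c * x) _ (invr_neq0 cn0) qn0.
have ex : c^-1 * (c * x) = x by rewrite mulrA mulVf ?mul1r.
by move: h; rewrite (comp_scaleK _ _ cn0) ex.
Qed.

Lemma cnt_comp (P : pred R) (c : R) p : 0 < c -> (forall x, P (c * x) = P x) ->
  cntp P (p \Po (c *: 'X)) = cntp P p.
Proof.
move=> cp Pc; have cn0 : c != 0 by rewrite gt_eqF.
have [->|pn0] := eqVneq p 0; first by rewrite comp_poly0.
have qn0 : p \Po (c *: 'X) != 0.
  by rewrite comp_poly_eq0 // size_scale // size_polyX.
rewrite (@cnt_any P _ [seq y / c | y <- rootsR p] qn0).
- rewrite big_map /cntp; apply: eq_big => [y|y _].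
    have ey : c * (y / c) = y by rewrite mulrC mulfVK.
    by rewrite -Pc ey.
  have ey : c * (y / c) = y by rewrite mulrC mulfVK.
  by rewrite (mup_comp _ _ _ cn0 pn0) ey.
- rewrite map_inj_uniq ?uniq_roots //; apply: mulIf; exact: invr_neq0.
move=> x; rewrite root_comp hornerZ hornerX => rx.
by apply/mapP; exists (c * x); rewrite ?mem_rootsR // [c * x]mulrC mulfK.
Qed.


Lemma cnt_prod (P : pred R) (I : Type) (r : seq I) (p : I -> {poly R}) :
  (forall i, p i != 0) ->
  cntp P (\prod_(i <- r) p i) = (\sum_(i <- r) cntp P (p i))%N.
Proof.
move=> pn0; elim: r => [|i r IH].
  rewrite !big_nil (@cnt_any P 1 [::]) ?oner_neq0 ?big_nil //.
  by move=> x; rewrite (negbTE (root1 x)).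
have hn : \prod_(j <- r) p j != 0.
  apply: (big_ind (fun q => q != 0)); first exact: oner_neq0.
    by move=> a b ha hb; exact: mulf_neq0.
  by move=> j _; exact: pn0.
by rewrite !big_cons (cntM _ _ _ (pn0 i) hn) IH.
Qed.

End Count.


Section CharPolyLemmas.
Variable F : fieldType.

Lemma char_castmx m n (e : m = n) (A : 'M[F]_m) :
  char_poly (castmx (e, e) A) = char_poly A.
Proof. by case: n / e; rewrite castmx_id. Qed.

Lemma char_lblock n1 n2 (A : 'M[F]_n1) (C : 'M[F]_(n2, n1)) (B : 'M[F]_n2) :
  char_poly (block_mx A 0 C B) = char_poly A * char_poly B.
Proof.
rewrite /char_poly /char_poly_mx (scalar_mx_block n1 n2) map_block_mx map_mx0.
by rewrite opp_block_mx add_block_mx oppr0 addr0 det_lblock.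
Qed.

Lemma char_conj n (V M : 'M[F]_n) : V \in unitmx ->
  char_poly (V *m M *m invmx V) = char_poly M.
Proof.
move=> Vu; rewrite /char_poly /char_poly_mx.
have -> : 'X%:M - map_mx polyC (V *m M *m invmx V) =
   map_mx polyC V *m ('X%:M - map_mx polyC M) *m map_mx polyC (invmx V).
  rewrite mulmxBr mulmxBl !map_mxM; congr (_ - _).
  by rewrite mul_mx_scalar -scalemxAl -map_mxM mulmxV // map_mx1 scalemx1.
rewrite !det_mulmx !det_map_mx mulrC mulrA -rmorphM /= -det_mulmx mulVmx //.
by rewrite det1 mul1r.
Qed.


Lemma char_mxdiag m (p_ : 'I_m -> nat) (B : forall i, 'M[F]_(p_ i)) :
  char_poly (\mxdiag_i B i) = \prod_i char_poly (B i).
Proof.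
elim: m p_ B => [|m IH] p_ B.
  rewrite [RHS]big_ord0.
  have h : forall n (M : 'M[F]_n), n = 0%N -> char_poly M = 1.
    by move=> n M en; subst n; rewrite /char_poly det_mx00.
  by apply: h; rewrite big_ord0.
have e := mxdiag_recl B.
transitivity (char_poly (castmx (mxsize_recl, mxsize_recl)
    (block_mx (B ord0) 0 0 (\mxdiag_i B (lift ord0 i))))).
  exact: (congr1 (@char_poly _ _) e).
by rewrite char_castmx char_lblock big_ord_recl IH.
Qed.

Lemma char_dvd_pid s n (D : 'M[F]_n) (A : 'M[F]_s) : (s <= n)%N ->
  pid_mx s *m D = A *m pid_mx s -> char_poly A %| char_poly D.
Proof.
move=> sn; move: (subnKC sn); move: (n - s)%N => t E; subst n.
rewrite (@pid_mx_row _ t s) -[D]submxK mul_row_block mul_mx_row !mul1mx !mul0mx !addr0.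
rewrite mulmx0 => /eq_row_mx [-> ->].
by rewrite mulmx1 char_lblock dvdp_mulr.
Qed.

Lemma char_dvd s n (P : 'M[F]_(s, n)) (D : 'M[F]_n) (A : 'M[F]_s) :
  row_free P -> P *m D = A *m P -> char_poly A %| char_poly D.
Proof.
move=> Pf PDA.
have rP : \rank P = s by apply/eqP.
have sn : (s <= n)%N by rewrite -rP rank_leq_col.
set L := col_ebase P; set U := row_ebase P.
have Lu : L \in unitmx by apply: col_ebase_unit.
have Uu : U \in unitmx by apply: row_ebase_unit.
have Pe : P = L *m pid_mx s *m U by rewrite -[X in pid_mx X]rP mulmx_ebase.
rewrite -(@char_conj _ U D Uu) -(@char_conj _ (invmx L) A) ?unitmx_inv // invmxK.
apply: char_dvd_pid => //.
move: PDA; rewrite Pe => /(congr1 (fun M => invmx L *m M *m invmx U)) /=.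
by rewrite !mulmxA mulVmx // mul1mx mulmxK // => ->.
Qed.


Lemma char_scale n (B : 'M[F]_n) (c : F) :
  char_poly (c *: B) \Po (c *: 'X) = c ^+ n *: char_poly B.
Proof.
rewrite /char_poly -det_map_mx.
have -> : map_mx (comp_poly (c *: 'X)) (char_poly_mx (c *: B)) =
          c%:P *: char_poly_mx B.
  apply/matrixP => i j; rewrite !mxE.
  case: eqP => _; rewrite ?mulr1n ?mulr0n comp_polyB ?comp_polyX ?comp_poly0 comp_polyC.
    by rewrite mulrBr -polyCM mul_polyC.
  by rewrite !sub0r mulrN -polyCM.
by rewrite detZ -mul_polyC rmorphXn.
Qed.

End CharPolyLemmas.


Section Single.
Variable R : rcfType.

Definition onec (n : nat) : 'cV[R]_n := const_mx 1.
Definition oner (n : nat) : 'rV[R]_n := const_mx 1.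
Definition Kb n := row_base (kermx (onec n)).
Definition Bm n (D : 'M[R]_n) := Kb n *m D *m pinvmx (Kb n).
Arguments Bm {n}.

Lemma Kb_one n : Kb n *m onec n = 0.
Proof. by apply/sub_kermxP; rewrite /Kb eq_row_base submx_refl. Qed.


Lemma Kb_stable n (D : 'M[R]_n) rho : D *m onec n = rho *: onec n ->
  Kb n *m D = Bm D *m Kb n.
Proof.
move=> h; rewrite /Bm mulmxKpV //.
have -> : (Kb n *m D <= Kb n)%MS = (Kb n *m D <= kermx (onec n))%MS.
  by rewrite {2}/Kb eq_row_base.
by apply/sub_kermxP; rewrite -mulmxA h -scalemxAr Kb_one scaler0.
Qed.

Lemma rank_ker_one n : (0 < n)%N -> (1 + \rank (kermx (onec n)))%N = n.
Proof.
move=> n0; rewrite mxrank_ker -mxrank_tr rank_rV.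
have -> : ((onec n)^T != 0) = true.
  apply/eqP => /matrixP /(_ 0 (Ordinal n0)); rewrite !mxE => /eqP.
  by rewrite oner_eq0.
by rewrite /= add1n subn1 prednK.
Qed.


Lemma oner_onec n : oner n *m onec n = (n%:R)%:M.
Proof.
apply/matrixP => i j; rewrite !mxE (ord1 i) (ord1 j) /= mulr1n.
rewrite (eq_bigr (fun _ => 1)) ?sumr_const ?card_ord // => a _.
by rewrite !mxE mulr1.
Qed.

Lemma char_single n (D : 'M[R]_n) rho : (0 < n)%N ->
  D *m onec n = rho *: onec n -> oner n *m D = rho *: oner n ->
  char_poly D %= ('X - rho%:P) * char_poly (Bm D).
Proof.
move=> n0 hc hr.
pose P1 := col_mx (oner n) (Kb n).
pose A1 := block_mx (rho%:M : 'M_1) 0 0 (Bm D).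
have e1 : P1 *m D = A1 *m P1.
  rewrite mul_col_mx mul_block_col !mul0mx addr0 add0r mul_scalar_mx hr.
  by rewrite (Kb_stable _ _ _ hc).
have f1 : row_free P1.
  apply: inj_row_free => v; rewrite -[v]hsubmxK mul_row_col.
  move=> h0; have := congr1 (fun M => M *m onec n) h0.
  rewrite mulmxDl -(mulmxA (rsubmx v)) -(mulmxA (lsubmx v)) Kb_one mulmx0 addr0 oner_onec mul0mx mul_mx_scalar.
  move/eqP; rewrite scaler_eq0 pnatr_eq0 eqn0Ngt n0 /= => /eqP a0.
  move: h0; rewrite a0 mul0mx add0r => /eqP; rewrite mulmx_free_eq0 ?row_base_free //.
  by move/eqP->; rewrite row_mx0.
have dv := char_dvd _ _ _ _ _ _ f1 e1.
have hA1 : char_poly A1 = ('X - rho%:P) * char_poly (Bm D).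
  rewrite char_lblock; congr (_ * _).
  by rewrite /char_poly det_mx11 !mxE /= !mulr1n.
rewrite -hA1 eqp_sym -dvdp_size_eqp // !size_char_poly.
by rewrite -[in X in _ == X](rank_ker_one _ n0).
Qed.

End Single.


Lemma sum_ord (R : nmodType) (T : finType) (f : 'I_#|T| -> R) :
  \sum_(a < #|T|) f a = \sum_(b : T) f (enum_rank b).
Proof. by rewrite (reindex (@enum_rank T)) //; exact: onW_bij (@enum_rank_bij T). Qed.
Arguments sum_ord {R T}.

Section Prod2.
Variable R : rcfType.
Variables (k : nat) (T : 'I_k -> finType) (e : forall i, rel (T i)).
Hypothesis conn : forall j (a b : T j), connect (e j) a b.
Local Notation V := {dffun forall i : 'I_k, T i}.
Local Notation E := (cprod_rel e).


Definition dd j (a b : T j) : R := (gdist (e j) a b)%:R.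
Definition Lift j : 'M[R]_(#|T j|, #|V|) :=
  \matrix_(a, q) ((enum_val q : V) j == enum_val a)%:R.
Definition fibR j (b : T j) : R := \sum_(y : V | y j == b) 1.

Lemma distG (p q : 'I_#|V|) :
  distmx R E p q = \sum_l dd l ((enum_val p : V) l) ((enum_val q : V) l).
Proof. by rewrite mxE gdist_prod // natr_sum. Qed.

Lemma distj j (a b : 'I_#|T j|) : distmx R (e j) a b = dd j (enum_val a) (enum_val b).
Proof. by rewrite mxE. Qed.

Lemma liftE j m (U : 'M[R]_(m, #|T j|)) i q :
  (U *m Lift j) i q = U i (enum_rank ((enum_val q : V) j)).
Proof.
rewrite mxE (bigD1 (enum_rank ((enum_val q : V) j))) //= mxE enum_rankK eqxx mulr1.
rewrite big1 ?addr0 // => a ne; rewrite mxE.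
case: eqP => [h|_]; last by rewrite mulr0.
by case/eqP: ne; rewrite h enum_valK.
Qed.


Definition sw j (b b0 : T j) (x : T j) : T j :=
  if x == b then b0 else if x == b0 then b else x.
Arguments sw {j}.

Lemma swK j (b b0 : T j) : involutive (sw b b0).
Proof.
move=> x; rewrite /sw; case: (eqVneq x b) => [->|xb].
  by rewrite eqxx; case: eqVneq.
case: (eqVneq x b0) => [->|xb0]; first by rewrite eqxx.
by rewrite (negbTE xb) (negbTE xb0).
Qed.

Lemma sw_eq j (b b0 x : T j) : (sw b b0 x == b0) = (x == b).
Proof.
rewrite /sw; case xb: (x == b); first by rewrite eqxx.
case xb0: (x == b0); last by rewrite xb0.
by move/eqP: xb0 xb => ->; rewrite eq_sym => ->.
Qed.

Lemma upd_upd (y : V) j (a b : T j) : upd (upd y j a) j b = upd y j b.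
Proof.
apply/ffunP => i; case: (eqVneq i j) => [->|ij]; first by rewrite !upd_in.
by rewrite !upd_out.
Qed.

Lemma upd_id (y : V) j : upd y j (y j) = y.
Proof.
apply/ffunP => i; case: (eqVneq i j) => [->|ij]; first by rewrite !upd_in.
by rewrite !upd_out.
Qed.

Lemma fib_shift j (G : V -> R) (b b0 : T j) :
  (forall y c, G (upd y j c) = G y) ->
  \sum_(y : V | y j == b) G y = \sum_(y : V | y j == b0) G y.
Proof.
move=> Ginv; pose s := fun y : V => upd y j (sw b b0 (y j)).
have sK : involutive s.
  by move=> y; rewrite /s upd_in upd_upd swK upd_id.
rewrite [RHS](reindex_inj (inv_inj sK)) /=.
by apply: eq_big => [y|y _]; rewrite /s ?upd_in ?sw_eq ?Ginv.
Qed.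

Lemma fib_sum j (F : T j -> R) (G : V -> R) (b0 : T j) :
  (forall y c, G (upd y j c) = G y) ->
  \sum_(y : V) F (y j) * G y = (\sum_b F b) * \sum_(y : V | y j == b0) G y.
Proof.
move=> Ginv; rewrite (partition_big (fun y : V => y j) predT) //=.
rewrite mulr_suml; apply: eq_bigr => b _.
rewrite (eq_bigr (fun y => F b * G y)); last by move=> y /eqP->.
by rewrite -mulr_sumr (fib_shift j G b b0).
Qed.


Lemma sumU0 j m (U : 'M[R]_(m, #|T j|)) i : U *m onec R _ = 0 ->
  \sum_(b : T j) U i (enum_rank b) = 0.
Proof.
move=> hU; rewrite -(sum_ord (fun a => U i a)).
have := congr1 (fun M : 'M[R]_(m, 1) => M i 0) hU; rewrite !mxE => h.
by rewrite -[RHS]h; apply: eq_bigr => a _; rewrite mxE mulr1.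
Qed.

Lemma lift_DG j m (U : 'M[R]_(m, #|T j|)) (b0 : T j) : U *m onec R _ = 0 ->
  U *m Lift j *m distmx R E = fibR j b0 *: (U *m distmx R (e j) *m Lift j).
Proof.
move=> hU; apply/matrixP => i q; rewrite mxE [in RHS]mxE liftE.
set x := (enum_val q : V).
rewrite (eq_bigr (fun q' => U i (enum_rank ((enum_val q' : V) j)) *
   \sum_l dd l ((enum_val q' : V) l) (x l))); last by move=> q' _; rewrite liftE distG.
rewrite (sum_ord (fun q' => U i (enum_rank ((enum_val q' : V) j)) *
   \sum_l dd l ((enum_val q' : V) l) (x l))).
under eq_bigr do rewrite enum_rankK mulr_sumr.
rewrite exchange_big /= (bigD1 j) //= [X in _ + X]big1 ?addr0; last first.
  move=> l lj.
  rewrite (fib_sum j (fun b => U i (enum_rank b)) (fun y : V => dd l (y l) (x l)) b0).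
    by rewrite sumU0 // mul0r.
  by move=> y c; rewrite upd_out.
rewrite (eq_bigr (fun y : V => (U i (enum_rank (y j)) * dd j (y j) (x j)) * 1)); last first.
  by move=> y _; rewrite mulr1.
rewrite (fib_sum j (fun b => U i (enum_rank b) * dd j b (x j)) (fun _ => 1) b0) //.
rewrite mulrC /fibR; congr (_ * _).
rewrite mxE (sum_ord (fun a => U i a * distmx R (e j) a (enum_rank (x j)))).
by apply: eq_bigr => b _; rewrite distj !enum_rankK.
Qed.


Variable rho : 'I_k -> R.
Hypothesis hrow : forall j (a : T j), \sum_(b : T j) dd j a b = rho j.
Hypothesis hsym : forall j (a b : T j), dd j a b = dd j b a.

Lemma oneG (b0 : forall j, T j) :
  oner R #|V| *m distmx R E = (\sum_l rho l * fibR l (b0 l)) *: oner R #|V|.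
Proof.
apply/matrixP => i q; rewrite !mxE mulr1.
set x := (enum_val q : V).
rewrite (eq_bigr (fun q' => \sum_l dd l ((enum_val q' : V) l) (x l))); last first.
  by move=> q' _; rewrite mxE mul1r distG.
rewrite (sum_ord (fun q' => \sum_l dd l ((enum_val q' : V) l) (x l))).
under eq_bigr do rewrite enum_rankK.
rewrite exchange_big /=; apply: eq_bigr => l _.
rewrite (eq_bigr (fun y : V => dd l (y l) (x l) * 1)); last by move=> y _; rewrite mulr1.
rewrite (fib_sum l (fun b => dd l b (x l)) (fun _ => 1) (b0 l)) //.
by rewrite -(hrow _ (x l)); congr (_ * _); apply: eq_bigr => b _; rewrite hsym.
Qed.

Lemma Dj_one j : distmx R (e j) *m onec R _ = rho j *: onec R _.
Proof.
apply/matrixP => a i; rewrite !mxE mulr1 -(hrow _ (enum_val a)).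
rewrite (sum_ord (fun b => distmx R (e j) a b * onec R _ b i)).
by apply: eq_bigr => b _; rewrite !mxE mulr1 enum_rankK.
Qed.

Lemma Dj_oner j : oner R _ *m distmx R (e j) = rho j *: oner R _.
Proof.
apply/matrixP => i a; rewrite !mxE mulr1 -(hrow _ (enum_val a)).
rewrite (sum_ord (fun b => oner R _ i b * distmx R (e j) b a)).
by apply: eq_bigr => b _; rewrite !mxE mul1r enum_rankK hsym.
Qed.

Definition sdim j := \rank (kermx (onec R #|T j|)).
Definition Lj j : 'M[R]_(sdim j, #|V|) := Kb R #|T j| *m Lift j.
Definition SG := col_mx (oner R #|V|) (\mxcol_j Lj j).
Definition AG (b0 : forall j, T j) :=
  block_mx ((\sum_l rho l * fibR l (b0 l))%:M : 'M_1) 0 0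
    (\mxdiag_j (fibR j (b0 j) *: Bm R _ (distmx R (e j)))).

Lemma SG_stable (b0 : forall j, T j) : SG *m distmx R E = AG b0 *m SG.
Proof.
rewrite /SG /AG mul_col_mx mul_block_col !mul0mx addr0 add0r mul_scalar_mx (oneG b0).
rewrite mxcol_mul mul_mxdiag_mxcol; congr col_mx; apply: eq_mxcol => j.
rewrite /Lj mulmxA (lift_DG _ _ _ (b0 j)) ?Kb_one //.
by rewrite (Kb_stable _ _ _ _ (Dj_one j)) -!scalemxAl.
Qed.


Lemma SG_free (y0 : V) : row_free SG.
Proof.
apply: inj_row_free => v; rewrite -[v]hsubmxK /SG mul_row_col.
set a := lsubmx v; set w := rsubmx v; clearbody a w.
rewrite -[w]submxrowK mul_mxrow_mxcol.
set u := fun j => submxrow w j *m Kb R #|T j|.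
have uone j : u j *m onec R _ = 0 by rewrite /u -mulmxA Kb_one mulmx0.
have -> : \sum_j submxrow w j *m Lj j = \sum_j u j *m Lift j.
  by apply: eq_bigr => j _; rewrite /Lj mulmxA.
move=> h0.
have hent : forall y : V, a 0 0 + \sum_j u j 0 (enum_rank (y j)) = 0.
  move=> y; have := congr1 (fun M : 'rV[R]_#|V| => M 0 (enum_rank y)) h0.
  rewrite !mxE summxE big_ord1 /oner mxE mulr1 => h; rewrite -[RHS]h; congr (_ + _).
  by apply: eq_bigr => j _; rewrite liftE enum_rankK.
have u0 : forall j, u j = 0.
  move=> j; have hc : forall b, u j 0 (enum_rank b) = u j 0 (enum_rank (y0 j)).
    move=> b; have h1 := hent (upd y0 j b); have h2 := hent y0.
    rewrite (bigD1 j) //= upd_in in h1; rewrite (bigD1 j) //= in h2.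
    have e1 : \sum_(l < k | l != j) u l 0 (enum_rank (upd y0 j b l)) =
              \sum_(l < k | l != j) u l 0 (enum_rank (y0 l)).
      by apply: eq_bigr => l lj; rewrite upd_out.
    rewrite e1 in h1; by move: (etrans h1 (esym h2)) => /addrI /addIr.
  have hs := sumU0 _ _ _ 0 (uone j).
  move: hs; rewrite (eq_bigr (fun _ => u j 0 (enum_rank (y0 j)))) // sumr_const.
  move/eqP; rewrite -mulr_natr mulf_eq0 pnatr_eq0 orbC.
  have -> : (#|T j| == 0%N) = false.
    by apply/negbTE; rewrite -lt0n; apply: leq_ltn_trans (ltn_ord (enum_rank (y0 j))).
  move=> /= /eqP k0; apply/matrixP => i x; rewrite (ord1 i) [RHS]mxE.
  by rewrite -(enum_valK x) hc k0.
have w0 : w = 0.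
  rewrite -[w]submxrowK -(mxrow0 1); apply: eq_mxrow => j.
  apply/eqP; rewrite -(mulmx_free_eq0 _ (row_base_free _)).
  by rewrite -/(Kb R #|T j|) -/(u j) u0.
have a0 : a 0 0 = 0.
  have := hent y0; rewrite (eq_bigr (fun _ => 0)) ?big1_eq ?addr0 // => j _.
  by rewrite u0 mxE.
have -> : a = 0 by apply/matrixP => i j; rewrite (ord1 i) (ord1 j) a0 mxE.
by rewrite submxrowK w0 row_mx0.
Qed.

End Prod2.


Lemma cnt_char_scale (R : rcfType) (P : pred R) n (B : 'M[R]_n) (f : R) :
  0 < f -> (forall x, P (f * x) = P x) ->
  cntp R P (char_poly (f *: B)) = cntp R P (char_poly B).
Proof.
move=> fp Pf; rewrite -(cnt_comp _ _ f _ fp Pf) char_scale cntZ //.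
by rewrite expf_neq0 // gt_eqF.
Qed.

Lemma cnt_eqp (R : rcfType) (P : pred R) p q : p != 0 -> q != 0 -> p %= q ->
  cntp R P p = cntp R P q.
Proof.
by move=> pn qn /andP[h1 h2]; apply/eqP; rewrite eqn_leq !cnt_dvd.
Qed.

Theorem lemma4 (R : rcfType) (k : nat) (T : 'I_k -> finType)
  (e : forall i, rel (T i)) :
  (0 < k)%N ->
  (forall i, simple_graph (e i)) ->
  (forall i, connected_graph (e i)) ->
  (forall i, const_row_sums (distmx R (e i))) ->
  (\sum_(i < k) nneg (distmx R (e i)) <= nneg (distmx R (cprod_rel e)))%N /\
  (1 + \sum_(i < k) ((npos (distmx R (e i)))%:Z - 1)
     <= (npos (distmx R (cprod_rel e)))%:Z).
Proof.
move=> k0 hsg hcg hcr.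
have conn : forall j (a b : T j), connect (e j) a b by move=> j; exact: (hcg j).2.
have pos : forall j, (0 < #|T j|)%N by move=> j; exact: (hcg j).1.
pose b0 := fun j => enum_val (Ordinal (pos j)).
pose y0 := @finfun _ (fun i => T i) b0 : {dffun forall i : 'I_k, T i}.
pose rho := fun j => \sum_(b : T j) dd R k T e j (b0 j) b.
have hrow : forall j (a : T j), \sum_b dd R k T e j a b = rho j.
  move=> j a; case: (hcr j) => c hc.
  have ee : forall a', \sum_b dd R k T e j a' b = c.
    move=> a'; rewrite -(hc (enum_rank a')).
    rewrite (sum_ord (fun b => distmx R (e j) (enum_rank a') b)).
    by apply: eq_bigr => b _; rewrite distj !enum_rankK.
  by rewrite /rho !ee.
have hsym : forall j (a b : T j), dd R k T e j a b = dd R k T e j b a.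
  by move=> j a b; rewrite /dd (gdist_sym (hsg j).1 (conn j a b)).
have rho_ge0 : forall j, 0 <= rho j by move=> j; apply: sumr_ge0 => b _; exact: ler0n.
have fib_gt0 : forall j, 0 < fibR R k T j (b0 j).
  move=> j; rewrite /fibR (bigD1 y0) /=; last by rewrite ffunE.
  apply: lt_le_trans ltr01 _; rewrite lerDl; exact: sumr_ge0.
set c := \sum_l rho l * fibR R k T l (b0 l).
have c_ge0 : 0 <= c by apply: sumr_ge0 => l _; rewrite mulr_ge0 // ltW.
set Bj := fun j => Bm R _ (distmx R (e j)).
have cpn0 : forall n (M : 'M[R]_n), char_poly M != 0.
  by move=> n M; exact: monic_neq0 (char_poly_monic M).
have hAG : char_poly (AG R k T e rho b0) =
    ('X - c%:P) * \prod_j char_poly (fibR R k T j (b0 j) *: Bj j).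
  rewrite /AG char_lblock char_mxdiag; congr (_ * _).
  by rewrite /char_poly det_mx11 !mxE /= !mulr1n.
have hdvd : char_poly (AG R k T e rho b0) %| char_poly (distmx R (cprod_rel e)).
  exact: (char_dvd _ _ _ _ _ _ (SG_free R k T y0) (SG_stable R k T e conn rho hrow hsym b0)).
have hcnt : forall P : pred R, (forall f x, 0 < f -> P (f * x) = P x) ->
    (P c + \sum_j cntp R P (char_poly (Bj j)) <=
     cntp R P (char_poly (distmx R (cprod_rel e))))%N.
  move=> P Ps; apply: leq_trans (cnt_dvd _ _ _ _ (cpn0 _ _) hdvd).
  rewrite hAG cntM ?polyXsubC_eq0 //; last first.
    apply: (big_ind (fun q => q != 0)); first exact: oner_neq0.
      by move=> a b ha hb; exact: mulf_neq0.
    by move=> j _; exact: cpn0.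
  rewrite cnt_XsubC cnt_prod // leq_add2l; apply: eq_leq; apply: eq_bigr => j _.
  by rewrite cnt_char_scale // => x; rewrite Ps.
have hj : forall P : pred R, (forall f x, 0 < f -> P (f * x) = P x) -> forall j,
    cntp R P (char_poly (distmx R (e j))) = (P (rho j) + cntp R P (char_poly (Bj j)))%N.
  move=> P Ps j.
  rewrite (cnt_eqp _ _ _ _ (cpn0 _ _) _ (char_single _ _ _ _ (pos j)
     (Dj_one R k T e rho hrow j) (Dj_oner R k T e rho hrow hsym j))); last first.
    by rewrite mulf_neq0 ?polyXsubC_eq0 ?cpn0.
  by rewrite cntM ?polyXsubC_eq0 ?cpn0 // cnt_XsubC.
have Pn_s : forall f x : R, 0 < f -> (f * x < 0) = (x < 0).
  by move=> f x fp; rewrite pmulr_rlt0.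
have Pp_s : forall f x : R, 0 < f -> (0 < f * x) = (0 < x).
  by move=> f x fp; rewrite pmulr_rgt0.
split.
  have hn := hcnt (fun x => x < 0) Pn_s.
  apply: leq_trans hn.
  have -> : (\sum_(i < k) nneg (distmx R (e i)) =
             \sum_(j < k) cntp R (fun x => (x < 0)%R) (char_poly (Bj j)))%N.
    apply: eq_bigr => j _.
    have -> : nneg (distmx R (e j)) = cntp R (fun x => x < 0) (char_poly (distmx R (e j))) by [].
    by rewrite hj // ltNge rho_ge0.
  exact: leq_addl.
have hp := hcnt (fun x => 0 < x) Pp_s.
have hX : forall j, npos (distmx R (e j)) =
    ((0 < rho j)%R + cntp R (fun x => (0 < x)%R) (char_poly (Bj j)))%N.
  by move=> j; rewrite -(hj _ Pp_s j).
have sumZ : forall F : 'I_k -> nat, ((\sum_i F i)%N)%:Z = \sum_i (F i)%:Z.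
  by move=> F; apply: (big_morph Posz PoszD).
set Y := fun j => cntp R (fun x => 0 < x) (char_poly (Bj j)).
under eq_bigr do rewrite hX.
have [cpos|cnpos] := boolP (0 < c).
  rewrite cpos in hp.
  apply: le_trans (_ : 1 + (\sum_j Y j)%N%:Z <= _); last by rewrite lez_nat.
  rewrite lerD2l sumZ; apply: ler_sum => j _.
  rewrite PoszD lerBlDr addrC lerD2l.
  by case: (0 < rho j).
have rho0 : forall j, (0 < rho j) = false.
  move=> j; apply/negbTE; apply: contra cnpos => rp.
  rewrite /c (bigD1 j) //=; apply: lt_le_trans (_ : 0 < rho j * fibR R k T j (b0 j)) _.
    by rewrite mulr_gt0.
  by rewrite lerDl; apply: sumr_ge0 => l _; rewrite mulr_ge0 // ltW.
under eq_bigr do rewrite rho0 add0n.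
rewrite (negbTE cnpos) add0n in hp.
rewrite sumrB -sumZ sumr_const card_ord.
apply: le_trans (_ : (\sum_j Y j)%N%:Z <= _); last by rewrite lez_nat.
by rewrite /Y addrCA gerDl subr_le0 ler1n.
Qed.
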